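(* Let $X$ be a complex Banach space, $T$ a bounded linear operator on $X$, and $x_0\in X$ a convex-cyclic vector for $T$. Let $\varepsilon>0$ and $N_0\in\mathbb{N}$. Then for every $x\in X$ there is a convex polynomial $P_k(t)=a_0+a_1t+\cdots+a_kt^k$ with $a_k>0$ and $k>N_0$ such that $\Vert P_k(T)(x_0)-x\Vert<\varepsilon$.
   Context: A convex polynomial is a polynomial $\sum_{i=0}^k a_it^i$ with $a_i\ge 0$ and $\sum_i a_i=1$. A vector $x_0$ is convex-cyclic for $T$ if the convex hull of $\{T^n x_0:n\ge 0\}$, i.e. $\{P(T)x_0: P \text{ a convex polynomial}\}$, is dense in $X$. *)

(* Defs.v *)
From HB Require Import structures.
From mathcomp Require Import all_boot all_order all_algebra.
From mathcomp Require Export complex.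
From mathcomp Require Import all_classical all_reals all_analysis.
Set Implicit Arguments. Unset Strict Implicit. Unset Printing Implicit Defensive.
Import Order.TTheory GRing.Theory Num.Theory.
Import numFieldNormedType.Exports.
Local Open Scope ring_scope.
Local Open Scope classical_set_scope.

Definition bounded_operator (R : realType) (V : normedModType R[i])
  (T : {linear V -> V}) : Prop :=
  exists M : R, forall x : V, `|T x| <= (M%:C)%C * `|x|.

Definition convex_coefs (R : realType) (k : nat) (a : nat -> R) : Prop :=
  (forall i, (i <= k)%N -> 0 <= a i) /\ \sum_(i < k.+1) a i = 1.

Definition poly_apply (R : realType) (V : normedModType R[i]) (T : V -> V)
  (k : nat) (a : nat -> R) (x : V) : V :=
  \sum_(i < k.+1) ((a i)%:C)%C *: iter i T x.

Definition convex_cyclic (R : realType) (V : normedModType R[i]) (T : V -> V)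
  (x0 : V) : Prop :=
  closure [set y | exists k (a : nat -> R), convex_coefs k a /\ y = poly_apply T k a x0]
  = setT.

(* Main.v *)
Require Import Defs.
From mathcomp Require Import all_boot all_order all_algebra.
From mathcomp Require Import complex.
From mathcomp Require Import all_classical all_reals all_analysis.
From mathcomp Require Import ring lra.
Import Order.TTheory GRing.Theory Num.Theory.
Import numFieldNormedType.Exports.
Local Open Scope ring_scope.

Section H.
Variable R : realType.
Lemma cM (a b : R) : ((a * b)%:C)%C = (a%:C * b%:C)%C :> R[i].
Proof. exact: rmorphM. Qed.
Lemma cD (a b : R) : ((a + b)%:C)%C = (a%:C + b%:C)%C :> R[i].
Proof. exact: rmorphD. Qed.
Lemma cB (a b : R) : ((a - b)%:C)%C = (a%:C - b%:C)%C :> R[i].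
Proof. exact: rmorphB. Qed.
End H.

Lemma sum_trunc (M : zmodType) (F : nat -> M) m k : (m < k)%N ->
  \sum_(i < k) (if (i <= m)%N then F i else 0) = \sum_(i < m.+1) F i.
Proof.
move=> mk; rewrite (big_ord_widen k F mk) big_mkcond /=.
by rewrite [RHS]big_mkcond.
Qed.

Lemma zmodeq (M : zmodType) (y u w x : M) : y - u + w - x = y - x + (w - u).
Proof. by rewrite -!addrA; congr (_ + _); rewrite addrCA addrC [- u + _]addrC -addrA [- u + w]addrC. Qed.

Theorem lemma2p2 (R : realType) (V : completeNormedModType R[i])
  (T : {linear V -> V}) (x0 : V) (eps : R) (N0 : nat) :
  bounded_operator T ->
  convex_cyclic T x0 ->
  0 < eps ->
  forall x : V, exists (k : nat) (a : nat -> R),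
    convex_coefs k a /\ 0 < a k /\ (N0 < k)%N /\
    `|poly_apply T k a x0 - x| < ((eps%:C)%C : R[i]).
Proof.
move=> _ Hcc eps0 x.
have e0 : 0 < (((eps / 2)%:C)%C : R[i]) by rewrite ltcR divr_gt0.
have : closure [set y | exists k (a : nat -> R), convex_coefs k a /\ y = poly_apply T k a x0] x
  by rewrite Hcc.
move=> /(_ (ball x ((eps / 2)%:C)%C) (nbhsx_ballx _ _ e0)) [_ [[m [a [Ha ->]]] Bxy]].
move: Bxy; rewrite -ball_normE /= distrC => Bxy.
set y := poly_apply T m a x0 in Bxy *.
set k := (m + N0).+1.
have mk : (m < k)%N by rewrite /k ltnS leq_addr.
set z := iter k T x0.
have Dr : `|z - y| \is Num.real by apply: normr_real.
set d := complex.Re `|z - y|.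
have dD : (d%:C)%C = `|z - y| by exact: RRe_real.
have d0 : 0 <= d by rewrite -ler0c dD.
set δ := eps / (2 * (d + eps)).
have hde : 0 < d + eps by rewrite ltr_wpDl.
have hδ : δ * (d + eps) = eps / 2 by rewrite /δ; field; rewrite gt_eqF.
have δ0 : 0 < δ by rewrite /δ divr_gt0 // mulr_gt0.
have δd : δ * d < eps / 2 by nra.
have δ1 : δ <= 1 by nra.
pose a' := fun i => if i == k then δ else if (i <= m)%N then (1 - δ) * a i else 0.
exists k, a'; split; last split; last split.
- split.
  + move=> i _; rewrite /a'; case: eqP => _; first exact: ltW.
    case: ifP => h; last by [].
    by apply: mulr_ge0; [rewrite subr_ge0|exact: Ha.1].
  + rewrite big_ord_recr /= /a' eqxx.
    rewrite (eq_bigr (fun i : 'I_k => if (i <= m)%N then (1 - δ) * a i else 0)); last first.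
      by move=> i _; rewrite ltn_eqF.
    by rewrite (sum_trunc _ (fun i => (1 - δ) * a i)) // -mulr_sumr Ha.2 mulr1 subrK.
- by rewrite /a' eqxx.
- by rewrite /k ltnS leq_addl.
have -> : poly_apply T k a' x0 = ((1 - δ)%:C)%C *: y + (δ%:C)%C *: z.
  rewrite /poly_apply big_ord_recr /= /a' eqxx; congr (_ + _).
  rewrite (eq_bigr (fun i : 'I_k => if (i <= m)%N then ((1 - δ)%:C)%C *: (((a i)%:C)%C *: iter i T x0) else 0)); last first.
    move=> i _; rewrite ltn_eqF //; case: ifP => _; first by rewrite cM scalerA.
    by rewrite scale0r.
  by rewrite (sum_trunc _ (fun i => ((1 - δ)%:C)%C *: (((a i)%:C)%C *: iter i T x0))) // -scaler_sumr.
have -> : ((1 - δ)%:C)%C *: y + (δ%:C)%C *: z - x = (y - x) + (δ%:C)%C *: (z - y).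
  rewrite cB scalerBl scale1r scalerBr.
  exact: zmodeq.
apply: (le_lt_trans (ler_normD _ _)).
rewrite normrZ ger0_norm ?ler0c; last exact: ltW.
rewrite -dD -cM.
have -> : (eps%:C)%C = ((eps/2)%:C + (eps/2)%:C)%C :> R[i] by rewrite -cD -splitr.
by apply: ltrD => //; rewrite ltcR.
Qed.
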